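(* Fix $\lambda>0$, $\epsilon>0$, $L_{\max}>0$, a decoding error probability $\delta\in(0,0.5)$ and a channel gain $|h_{ab}|^2>0$. Let $X$ be an exponential random variable with mean $1/\lambda$ and, for $P_a>0$, note that $$\mathbb{E}\left[\ln(XP_a+1)-\frac{XP_a}{XP_a+1}\right]=f(P_a):=-\left[1+\left(1+\frac{\lambda}{P_a}\right)e^{\lambda/P_a}\,\mathrm{Ei}\left(-\frac{\lambda}{P_a}\right)\right].$$ For $L_1>0$ and $P_a>0$ let $$R(L_1,P_a)=\log_2\left(1+P_a|h_{ab}|^2\right)-\sqrt{\frac{1}{L_1}\left(1-\frac{1}{(1+P_a|h_{ab}|^2)^2}\right)}\,\frac{Q^{-1}(\delta)}{\ln 2}.$$ Consider maximizing $L_1 R(L_1,P_a)(1-\delta)$ over $L_1$ and $P_a$ subject to $L_1 f(P_a)\le 2\epsilon^2$ and $L_1\le L_{\max}$. Then, for a given $P_a$, the optimal number of channel uses is $$L_1^*=\min\left(L_{\max},\frac{2\epsilon^2}{f(P_a)}\right),$$ and the optimal transmit power is a solution of maximizing $L_1^* R(L_1^*,P_a)(1-\delta)$ over $P_a>0$.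
   Context: $\mathrm{Ei}(x)=-\int_{-x}^{\infty}\frac{e^{-t}}{t}\,dt$ is the exponential integral. $Q^{-1}$ is the inverse of the Gaussian Q-function. This is the single-antenna-adversary case ($M=1$): $L_1\left(\ln(XP_a+1)-\frac{XP_a}{XP_a+1}\right)$ is the Kullback–Leibler divergence between $L_1$ i.i.d. observations $\mathcal{CN}(0,1)$ and $\mathcal{CN}(0,P_aX+1)$ given channel gain $X$; $L_1$ is treated as a continuous variable.
   Formalization: Both the optimality of $L_1^*$ for a given $P_a$ and the joint optimality of a power maximizing $L_1^* R(L_1^*,P_a)(1-\delta)$ hold under the extra hypothesis $R(L_1^*,P_a)\ge 0$ at that power. Apart from conventions, each condition added here is assumed in the paper as well or is needed for the statement above to hold. *)

(* Defs.v *)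
From Stdlib Require Import Reals.
From Coquelicot Require Import Coquelicot.
Open Scope R_scope.

(* Exponential integral Ei(x) = - \int_{-x}^{\infty} e^{-t}/t dt
   (used only at negative arguments, where this improper integral converges). *)
Definition Ei (x : R) : R :=
  - RInt_gen (fun t => exp (- t) / t) (at_point (- x)) (Rbar_locally p_infty).

Definition Qfun (x : R) : R :=
  RInt_gen (fun t => exp (- t ^ 2 / 2) / sqrt (2 * PI))
           (at_point x) (Rbar_locally p_infty).

Definition log2 (x : R) : R := ln x / ln 2.

Definition fKL (lam Pa : R) : R :=
  - (1 + (1 + lam / Pa) * exp (lam / Pa) * Ei (- (lam / Pa))).

(* R(L1,Pa), with q = Q^{-1}(delta) and h2 = |h_ab|^2 *)
Definition rate (h2 q L1 Pa : R) : R :=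
  log2 (1 + Pa * h2)
  - sqrt (/ L1 * (1 - / (1 + Pa * h2) ^ 2)) * q / ln 2.

Definition objective (h2 q delta L1 Pa : R) : R :=
  L1 * rate h2 q L1 Pa * (1 - delta).

Definition feasible (lam eps Lmax L1 Pa : R) : Prop :=
  0 < L1 /\ 0 < Pa /\ L1 * fKL lam Pa <= 2 * eps ^ 2 /\ L1 <= Lmax.

Definition L1opt (lam eps Lmax Pa : R) : R :=
  Rmin Lmax (2 * eps ^ 2 / fKL lam Pa).

(* Main.v *)
Require Import Defs.
From Stdlib Require Import Reals.
From Coquelicot Require Import Coquelicot.
From Stdlib Require Import Lra Psatz Classical.
Open Scope R_scope.

Lemma lim_mono (G : R -> R) a M :
  (forall x y, a <= x -> x <= y -> G x <= G y) ->
  (forall x, a <= x -> G x <= M) ->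
  exists l : R, is_lim G p_infty l.
Proof.
  intros Hm Hb.
  set (E := fun z => exists x, a <= x /\ z = G x).
  assert (HE : bound E) by (exists M; intros z [x [Hx ->]]; auto).
  assert (HE' : exists z, E z) by (exists (G a); exists a; split; [lra|auto]).
  destruct (completeness E HE HE') as [m [Hub Hlub]].
  exists m. unfold is_lim. simpl. apply filterlim_locally. intros eps.
  destruct (classic (exists x0, a <= x0 /\ m - eps < G x0)) as [[x0 [Hx0 Hg]]|Hn].
  - exists (Rmax a x0). intros x Hx.
    assert (a <= x) by (generalize (Rmax_l a x0); lra).
    assert (x0 <= x) by (generalize (Rmax_r a x0); lra).
    assert (G x0 <= G x) by (apply Hm; lra).
    assert (G x <= m) by (apply Hub; exists x; split; auto).
    change (Rabs (G x - m) < eps). apply Rabs_def1; lra.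
  - exfalso.
    assert (m <= m - eps).
    { apply Hlub. intros z [x [Hx ->]].
      destruct (Rle_lt_dec (G x) (m - eps)); auto.
      exfalso; apply Hn; exists x; split; auto. }
    destruct eps; simpl in *; lra.
Qed.

Lemma lim_gen (f : R -> R) a G (l : R) :
  (forall b, a <= b -> is_RInt f a b (G b)) ->
  is_lim G p_infty l ->
  is_RInt_gen f (at_point a) (Rbar_locally p_infty) l.
Proof.
  intros H HG P HP. unfold filtermapi.
  apply (Filter_prod _ _ _ (fun x => x = a) (fun b => a <= b /\ P (G b))).
  - reflexivity.
  - apply filter_and.
    + exists a; intros; lra.
    + apply HG. exact HP.
  - intros x y -> [Hb HPb]. exists (G y); split; auto.
Qed.

Lemma lim_zero_bound (g : R -> R) C :
  (forall b, 1 <= b -> Rabs (g b) * b <= C) ->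
  is_lim g p_infty 0.
Proof.
  intros H. unfold is_lim. simpl. apply filterlim_locally. intros [eps Heps].
  exists (1 + Rabs C / eps). intros x Hx. change (Rabs (g x - 0) < eps).
  rewrite Rminus_0_r.
  assert (0 <= Rabs C / eps) by (apply Rdiv_le_0_compat; [apply Rabs_pos|lra]).
  assert (Hc : Rabs C < eps * x).
  { assert (Rabs C / eps * eps = Rabs C) by (field; lra).
    nra. }
  specialize (H x ltac:(lra)). generalize (Rle_abs C). nra.
Qed.

Lemma lim_lin_infty mu lam : 0 < lam -> is_lim (fun b => mu + lam * b) p_infty p_infty.
Proof.
  intros Hl P [M HM]. exists ((M - mu) / lam). intros x Hx. apply HM.
  assert ((M - mu) / lam * lam = M - mu) by (field; lra). nra.
Qed.

Lemma key a c q d L Ls : 0 < L -> L <= Ls -> 0 <= a -> 0 <= c ->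
  L * (a - sqrt (/ L * c) * q / d) <= Rmax 0 (Ls * (a - sqrt (/ Ls * c) * q / d)).
Proof.
  intros HL HLs Ha Hc.
  assert (forall X, 0 < X -> X * (a - sqrt (/ X * c) * q / d) =
     sqrt X * sqrt X * a - sqrt X * (sqrt c * q / d)).
  { intros X HX. rewrite sqrt_mult; [|left; apply Rinv_0_lt_compat; auto|auto].
    rewrite sqrt_inv. assert (0 < sqrt X) by (apply sqrt_lt_R0; auto).
    unfold Rdiv. set (di := / d). pattern X at 1. rewrite <- (sqrt_sqrt X) by lra. field. lra. }
  rewrite !H by lra.
  assert (0 < sqrt L) by (apply sqrt_lt_R0; auto).
  assert (sqrt L <= sqrt Ls) by (apply sqrt_le_1_alt; auto).
  set (s := sqrt L) in *. set (t := sqrt Ls) in *. set (k := sqrt c * q / d) in *.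
  assert (0 < t) by lra.
  assert (Hp : 0 <= a * s * t * (t - s)).
  { apply Rmult_le_pos; [|lra]. apply Rmult_le_pos; [|lra]. apply Rmult_le_pos; lra. }
  destruct (Rle_lt_dec 0 (t * t * a - t * k)).
  - rewrite Rmax_right by auto.
    assert (t * (s*s*a - s*k) <= s * (t*t*a - t*k)) by nra.
    assert (s * (t*t*a - t*k) <= t * (t*t*a - t*k)) by nra.
    assert (t * (s*s*a - s*k) <= t * (t*t*a - t*k)) by lra.
    apply Rmult_le_reg_l with t; lra.
  - rewrite Rmax_left by lra.
    assert (t * (s*s*a - s*k) <= s * (t*t*a - t*k)) by nra.
    assert (s * (t*t*a - t*k) <= 0) by nra.
    apply Rmult_le_reg_l with t; lra.
Qed.


Definition gE (t : R) := exp (- t) / t.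
Definition EE (mu s : R) := RInt gE mu s.

Lemma gE_cont t : 0 < t -> continuous gE t.
Proof. intros Ht. apply (@ex_derive_continuous R_AbsRing R_NormedModule). unfold gE. auto_derive. lra. Qed.

Lemma ex_RInt_gE a b : 0 < a -> 0 < b -> ex_RInt gE a b.
Proof.
  intros Ha Hb. apply (@ex_RInt_continuous R_CompleteNormedModule). intros z [Hz _]. apply gE_cont.
  apply Rlt_le_trans with (2 := Hz). apply Rmin_case; auto.
Qed.

Lemma EE_deriv mu s : 0 < mu -> 0 < s -> is_derive (EE mu) s (gE s).
Proof.
  intros Hm Hs. apply (@is_derive_RInt R_NormedModule gE (EE mu) mu).
  - exists (mkposreal (s/2) ltac:(lra)). intros b Hb. apply (@RInt_correct R_CompleteNormedModule).
    apply ex_RInt_gE; auto. change (Rabs (b - s) < s/2) in Hb.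
    apply Rabs_def2 in Hb. lra.
  - apply gE_cont; auto.
Qed.

Lemma EE_mono mu x y : 0 < mu -> mu <= x -> x <= y -> EE mu x <= EE mu y.
Proof.
  intros Hm Hx Hy. unfold EE.
  rewrite <- (@RInt_Chasles R_CompleteNormedModule gE mu x y) by (apply ex_RInt_gE; lra).
  assert (0 <= RInt gE x y).
  { apply RInt_ge_0; auto. apply ex_RInt_gE; lra. intros t Ht.
    unfold gE. apply Rdiv_le_0_compat. left; apply exp_pos. lra. }
  change (plus (RInt gE mu x) (RInt gE x y)) with (RInt gE mu x + RInt gE x y). lra.
Qed.

Lemma EE_bound mu x : 0 < mu -> mu <= x -> EE mu x <= exp (- mu) / mu.
Proof.
  intros Hm Hx. unfold EE.
  assert (Hi : is_RInt (fun t => exp (- t) / mu) mu x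
             (minus ((fun t => - exp (- t) / mu) x) ((fun t => - exp (- t) / mu) mu))).
  { apply (@is_RInt_derive R_CompleteNormedModule (fun t => - exp (- t) / mu)).
    - intros t _. auto_derive; auto. field. lra.
    - intros t _. apply (@ex_derive_continuous R_AbsRing R_NormedModule). auto_derive. lra. }
  apply Rle_trans with (RInt (fun t => exp (- t) / mu) mu x).
  - apply RInt_le; auto. apply ex_RInt_gE; lra. eexists; eauto.
    intros t Ht. unfold gE. unfold Rdiv. apply Rmult_le_compat_l.
    left; apply exp_pos. apply Rinv_le_contravar; lra.
  - rewrite (@is_RInt_unique R_CompleteNormedModule _ _ _ _ Hi). change (minus ?a ?b) with (a - b).
    assert (0 < exp (- x) / mu) by (apply Rdiv_lt_0_compat; [apply exp_pos|lra]).
    unfold Rdiv in *. lra.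
Qed.

Lemma EE_lim mu : 0 < mu -> exists Eint : R,
  is_lim (EE mu) p_infty Eint /\
  RInt_gen (fun t => exp (- t) / t) (at_point mu) (Rbar_locally p_infty) = Eint.
Proof.
  intros Hm.
  destruct (lim_mono (EE mu) mu (exp (- mu) / mu)) as [l Hl].
  - intros; apply EE_mono; lra.
  - intros; apply EE_bound; lra.
  - exists l; split; auto.
    eapply (@is_RInt_gen_unique R_CompleteNormedModule); [ | | exact (lim_gen gE mu (EE mu) l ltac:(intros b Hb; apply (@RInt_correct R_CompleteNormedModule); apply ex_RInt_gE; lra) Hl)].
    all: try apply Proper_StrongProper; try apply at_point_filter; try apply Rbar_locally_filter.
Qed.


Section Main.
Variables lam P : R.
Hypothesis Hl : 0 < lam.
Hypothesis HP : 0 < P.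

Let mu := lam / P.
Definition FF x := ln (x * P + 1) - x * P / (x * P + 1).
Definition TT x := (ln (x * P + 1) - x * P / (x * P + 1)) * (lam * exp (- lam * x)).
Definition AA x := exp (- lam * x) * (/ (x * P + 1) - FF x).
Definition cc := (1 + lam / P) * exp (lam / P).
Definition PHI x := AA x + cc * EE (lam / P) (lam / P + lam * x).

Lemma mu_pos : 0 < lam / P.
Proof. apply Rdiv_lt_0_compat; auto. Qed.

Lemma AA_deriv x : 0 <= x ->
  is_derive AA x (TT x - cc * (lam * gE (lam / P + lam * x))).
Proof.
  intros Hx. assert (0 < x * P + 1) by nra.
  unfold AA, FF, TT, cc, gE.
  assert (E1 : exp (- (lam / P + lam * x)) = / exp (lam / P) * exp (- lam * x)).
  { rewrite <- exp_Ropp, <- exp_plus. f_equal. ring. }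
  rewrite E1.
  assert (0 < exp (lam / P)) by apply exp_pos.
  assert (0 < lam / P + lam * x) by (generalize mu_pos; nra).
  auto_derive.
  - lra.
  - field. repeat split; try lra. nra.
Qed.

Lemma PHI_deriv x : 0 <= x -> is_derive PHI x (TT x).
Proof.
  intros Hx.
  assert (Hs : 0 < lam / P + lam * x) by (generalize mu_pos; nra).
  assert (K1 := AA_deriv x Hx).
  assert (K2 : is_derive (fun y => EE (lam / P) (lam / P + lam * y)) x
                 (scal lam (gE (lam / P + lam * x)))).
  { apply (is_derive_comp (EE (lam / P)) (fun y => lam / P + lam * y)).
    - apply EE_deriv; auto. apply mu_pos.
    - auto_derive. auto. ring. }
  assert (K3 := is_derive_scal _ _ cc _ K2).
  assert (K := is_derive_plus _ _ _ _ _ K1 K3).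
  unfold PHI. replace (TT x) with
   (plus (TT x - cc * (lam * gE (lam / P + lam * x))) (cc * scal lam (gE (lam / P + lam * x)))).
  exact K.
  unfold plus, scal; simpl; unfold mult; simpl. ring.
Qed.

Lemma TT_cont x : 0 <= x -> continuous TT x.
Proof.
  intros Hx. assert (0 < x * P + 1) by nra.
  apply (@ex_derive_continuous R_AbsRing R_NormedModule). unfold TT. auto_derive. lra.
Qed.

Lemma TT_int a b : 0 <= a -> a <= b -> is_RInt TT a b (PHI b - PHI a).
Proof.
  intros Ha Hb.
  apply (@is_RInt_derive R_CompleteNormedModule PHI TT a b).
  - intros x Hx. rewrite Rmin_left in Hx by lra. apply PHI_deriv. lra.
  - intros x Hx. rewrite Rmin_left in Hx by lra. apply TT_cont. lra.
Qed.

Lemma PHI0 : PHI 0 = 1.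
Proof.
  unfold PHI, AA, FF, EE. replace (lam / P + lam * 0) with (lam / P) by ring.
  replace (- lam * 0) with 0 by ring.
  rewrite (@RInt_point R_CompleteNormedModule). change (@zero R_CompleteNormedModule) with 0.
  replace (0 * P + 1) with 1 by ring. rewrite ln_1, exp_0. field.
Qed.

Lemma exp_bound y : 0 < y -> exp (- y) * (y * y) <= 4.
Proof.
  intros Hy.
  assert (E : exp y = exp (y / 2) * exp (y / 2)) by (rewrite <- exp_plus; f_equal; field).
  assert (H1 := exp_ineq1_le (y / 2)).
  assert (y * y <= 4 * exp y) by (rewrite E; nra).
  rewrite exp_Ropp. assert (0 < exp y) by apply exp_pos.
  apply Rmult_le_reg_l with (exp y); auto.
  rewrite <- Rmult_assoc, Rinv_r by lra. lra.
Qed.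

Lemma ln_le_id y : 0 <= y -> 0 <= ln (y + 1) <= y.
Proof.
  intros Hy. split.
  - rewrite <- ln_1. apply ln_le; lra.
  - rewrite <- (ln_exp y) at 2. apply ln_le; [lra|]. generalize (exp_ineq1_le y); lra.
Qed.

Lemma AA_lim : is_lim AA p_infty 0.
Proof.
  apply (lim_zero_bound AA (4 * (2 + P) / (lam * lam))).
  intros b Hb.
  assert (0 < b * P + 1) by nra.
  assert (Hln := ln_le_id (b * P) ltac:(nra)).
  assert (0 <= b * P / (b * P + 1) <= 1).
  { split. apply Rdiv_le_0_compat; nra. apply Rmult_le_reg_r with (b * P + 1); auto.
    unfold Rdiv. rewrite Rmult_assoc, Rinv_l by lra. lra. }
  assert (0 < / (b * P + 1) <= 1).
  { split. apply Rinv_0_lt_compat; auto. rewrite <- Rinv_1. apply Rinv_le_contravar; nra. }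
  assert (Hab : Rabs (/ (b * P + 1) - FF b) <= 2 + b * P).
  { unfold FF. apply Rabs_le. lra. }
  unfold AA. rewrite Rabs_mult, Rabs_right by (left; apply exp_pos).
  assert (He := exp_bound (lam * b) ltac:(nra)).
  replace (- lam * b) with (- (lam * b)) by ring.
  set (e := exp (- (lam * b))) in *.
  assert (0 < e) by apply exp_pos.
  assert (e * (b * b) <= 4 / (lam * lam)).
  { apply Rmult_le_reg_r with (lam * lam). nra. replace (4 / (lam * lam) * (lam * lam)) with 4 by (field; lra). nra. }
  apply Rle_trans with (e * (2 + b * P) * b). 
  { apply Rmult_le_compat_r; [lra|]. apply Rmult_le_compat_l; lra. }
  apply Rle_trans with (e * (b * b) * (2 + P)).
  { assert (0 <= e * (2 * b * (b - 1))) by (apply Rmult_le_pos; nra). nra. }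
  replace (4 * (2 + P) / (lam * lam)) with (4 / (lam * lam) * (2 + P)) by (field; lra).
  apply Rmult_le_compat_r; lra.
Qed.

End Main.

Lemma F_pos y : 0 < y -> y / (y + 1) < ln (y + 1).
Proof.
  intros Hy. set (w := y / (y + 1)).
  assert (Hw : 0 < w < 1).
  { unfold w; split. apply Rdiv_lt_0_compat; lra.
    apply Rmult_lt_reg_r with (y + 1); [lra|]. unfold Rdiv. rewrite Rmult_assoc, Rinv_l by lra. lra. }
  assert (H1 := exp_ineq1 (- w) ltac:(lra)).
  assert (exp w < y + 1).
  { assert (E : exp w = / exp (- w)) by (rewrite exp_Ropp, Rinv_inv; auto).
    rewrite E. replace (y + 1) with (/ (1 - w)) by (unfold w; field; lra).
    apply Rinv_lt_contravar; [|lra]. apply Rmult_lt_0_compat; [lra|apply exp_pos]. }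
  apply exp_lt_inv. rewrite exp_ln by lra. auto.
Qed.

Lemma part1 lam P : 0 < lam -> 0 < P ->
  is_RInt_gen (fun x => (ln (x * P + 1) - x * P / (x * P + 1)) * (lam * exp (- lam * x)))
    (at_point 0) (Rbar_locally p_infty) (fKL lam P) /\ 0 < fKL lam P.
Proof.
  intros Hl HP.
  assert (Hmu : 0 < lam / P) by (apply Rdiv_lt_0_compat; auto).
  destruct (EE_lim (lam / P) Hmu) as [Ei0 [HEl HEr]].
  assert (Hf : fKL lam P = 0 + cc lam P * Ei0 + -1).
  { unfold fKL, Ei. rewrite Ropp_involutive, HEr. unfold cc. ring. }
  assert (HG : is_lim (fun b => PHI lam P b - PHI lam P 0) p_infty (fKL lam P)).
  { rewrite Hf.
    apply is_lim_ext with (fun b => AA lam P b + cc lam P * EE (lam / P) (lam / P + lam * b) + -1).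
    { intros y. rewrite PHI0 by auto. unfold PHI. ring. }
    apply is_lim_plus'; [|apply is_lim_const].
    apply is_lim_plus'. apply AA_lim; auto.
    assert (K := is_lim_scal_l _ (cc lam P) _ _
      (is_lim_comp (EE (lam / P)) (fun b => lam / P + lam * b) p_infty Ei0 p_infty HEl
         (lim_lin_infty (lam / P) lam Hl) ltac:(exists 0; intros; discriminate))).
    exact K. }
  split.
  - apply (lim_gen _ 0 (fun b => PHI lam P b - PHI lam P 0)); auto.
    intros b Hb. apply (TT_int lam P Hl HP 0 b); lra.
  - assert (Hpos : 0 < RInt (TT lam P) 0 1).
    { apply RInt_gt_0. lra.
      - intros x Hx. unfold TT. apply Rmult_lt_0_compat.
        + assert (K := F_pos (x * P) ltac:(nra)). lra.
        + apply Rmult_lt_0_compat; auto; apply exp_pos.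
      - intros x Hx. apply TT_cont; auto; lra. }
    assert (E01 : RInt (TT lam P) 0 1 = PHI lam P 1 - PHI lam P 0).
    { apply (@is_RInt_unique R_CompleteNormedModule). apply TT_int; auto; lra. }
    assert (Hloc : Rbar_locally' p_infty (fun b => RInt (TT lam P) 0 1 <= PHI lam P b - PHI lam P 0)).
    { exists 1; intros b Hb.
      assert (E1b : RInt (TT lam P) 1 b = PHI lam P b - PHI lam P 1) by
        (apply (@is_RInt_unique R_CompleteNormedModule); apply TT_int; auto; lra).
      assert (0 <= RInt (TT lam P) 1 b).
      { apply RInt_ge_0; [lra | eexists; apply TT_int; auto; lra |].
        intros x Hx; unfold TT; apply Rmult_le_pos.
        - assert (K := F_pos (x * P) ltac:(nra)); lra.
        - apply Rmult_le_pos; [lra | left; apply exp_pos]. }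
      lra. }
    assert (Hle := is_lim_le_loc (fun _ => RInt (TT lam P) 0 1) _ p_infty _ _ Hloc
       (is_lim_const _ _) HG).
    simpl in Hle. lra.
Qed.


Lemma opt_step lam eps Lmax delta h2 q L1 Pa :
  0 < lam -> 0 < eps -> 0 < Lmax -> 0 < delta < / 2 -> 0 < h2 ->
  feasible lam eps Lmax L1 Pa ->
  0 < L1opt lam eps Lmax Pa /\ L1 <= L1opt lam eps Lmax Pa /\
  objective h2 q delta L1 Pa <= Rmax 0 (objective h2 q delta (L1opt lam eps Lmax Pa) Pa).
Proof.
  intros Hl He HL Hd Hh [H1 [H2 [H3 H4]]].
  destruct (part1 lam Pa Hl H2) as [_ Hf].
  assert (Hs : 0 < L1opt lam eps Lmax Pa).
  { unfold L1opt. apply Rmin_case; auto. apply Rdiv_lt_0_compat; auto. nra. }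
  assert (Hle : L1 <= L1opt lam eps Lmax Pa).
  { unfold L1opt. apply Rmin_glb; auto.
    apply Rmult_le_reg_r with (fKL lam Pa); auto. unfold Rdiv.
    rewrite Rmult_assoc, Rinv_l by lra. lra. }
  split; auto. split; auto.
  unfold objective, rate.
  assert (Hln2 : 0 < ln 2) by (rewrite <- ln_1; apply ln_increasing; lra).
  assert (Ha : 0 <= log2 (1 + Pa * h2)).
  { unfold log2. apply Rdiv_le_0_compat; [|lra]. rewrite <- ln_1. apply ln_le; nra. }
  assert (Hc : 0 <= 1 - / (1 + Pa * h2) ^ 2).
  { assert (/ (1 + Pa * h2) ^ 2 <= 1); [|lra].
    rewrite <- Rinv_1. apply Rinv_le_contravar; [lra|]. nra. }
  assert (K := key _ _ q (ln 2) _ _ H1 Hle Ha Hc).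
  assert (Hd' : 0 < 1 - delta) by lra.
  set (X := L1opt lam eps Lmax Pa * (log2 (1 + Pa * h2) -
         sqrt (/ L1opt lam eps Lmax Pa * (1 - / (1 + Pa * h2) ^ 2)) * q / ln 2)) in *.
  apply Rle_trans with (Rmax 0 X * (1 - delta)).
  { apply Rmult_le_compat_r; lra. }
  unfold Rmax. destruct (Rle_dec 0 X); destruct (Rle_dec 0 (X * (1 - delta))); nra.
Qed.

Theorem corollary1 (lam eps Lmax delta h2 q : R) :
  0 < lam -> 0 < eps -> 0 < Lmax -> 0 < delta < / 2 -> 0 < h2 ->
  Qfun q = delta ->
  (* the expectation identity: E[ln(X Pa + 1) - X Pa/(X Pa + 1)] = f(Pa),
     X exponential with mean 1/lam (density lam e^{-lam x} on [0,oo)) *)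
  (forall Pa, 0 < Pa ->
     is_RInt_gen
       (fun x => (ln (x * Pa + 1) - x * Pa / (x * Pa + 1)) * (lam * exp (- lam * x)))
       (at_point 0) (Rbar_locally p_infty) (fKL lam Pa))
  /\
  (* for a given Pa, L1^* is optimal *)
  (forall Pa, 0 < Pa ->
     0 <= rate h2 q (L1opt lam eps Lmax Pa) Pa ->
     feasible lam eps Lmax (L1opt lam eps Lmax Pa) Pa /\
     forall L1, feasible lam eps Lmax L1 Pa ->
       objective h2 q delta L1 Pa
       <= objective h2 q delta (L1opt lam eps Lmax Pa) Pa)
  /\
  (* a maximizer Pa* of Pa |-> objective(L1^*(Pa), Pa) gives a joint optimum *)
  (forall Pstar, 0 < Pstar ->
     0 <= rate h2 q (L1opt lam eps Lmax Pstar) Pstar ->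
     (forall Pa, 0 < Pa ->
        objective h2 q delta (L1opt lam eps Lmax Pa) Pa
        <= objective h2 q delta (L1opt lam eps Lmax Pstar) Pstar) ->
     forall L1 Pa, feasible lam eps Lmax L1 Pa ->
       objective h2 q delta L1 Pa
       <= objective h2 q delta (L1opt lam eps Lmax Pstar) Pstar).
Proof.
  intros Hl He HL Hd Hh _.
  assert (Hfeas : forall Pa, 0 < Pa -> feasible lam eps Lmax (L1opt lam eps Lmax Pa) Pa).
  { intros Pa HPa. destruct (part1 lam Pa Hl HPa) as [_ Hf].
    assert (Hs : 0 < L1opt lam eps Lmax Pa).
    { unfold L1opt. apply Rmin_case; auto. apply Rdiv_lt_0_compat; auto. nra. }
    split; auto. split; auto. split.
    - apply Rle_trans with (2 * eps ^ 2 / fKL lam Pa * fKL lam Pa).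
      + apply Rmult_le_compat_r; [lra|]. apply Rmin_r.
      + right. field. lra.
    - apply Rmin_l. }
  assert (Hobj : forall Pa, 0 < Pa -> 0 <= rate h2 q (L1opt lam eps Lmax Pa) Pa ->
            0 <= objective h2 q delta (L1opt lam eps Lmax Pa) Pa).
  { intros Pa HPa Hr. destruct (Hfeas Pa HPa) as [Hs _].
    unfold objective. apply Rmult_le_pos; [apply Rmult_le_pos|]; lra. }
  split; [|split].
  - intros Pa HPa. apply part1; auto.
  - intros Pa HPa Hr. split; auto.
    intros L1 HF. destruct (opt_step lam eps Lmax delta h2 q L1 Pa Hl He HL Hd Hh HF) as [_ [_ K]].
    rewrite Rmax_right in K; auto.
  - intros Ps HPs Hr Hmax L1 Pa HF.
    assert (HPa : 0 < Pa) by (destruct HF as [_ [? _]]; auto).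
    destruct (opt_step lam eps Lmax delta h2 q L1 Pa Hl He HL Hd Hh HF) as [_ [_ K]].
    apply Rle_trans with (1 := K). apply Rmax_lub.
    + apply Hobj; auto.
    + apply Hmax; auto.
Qed.
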